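(* Let $H>0$ and $R\in(0,\pi)$. For $0\le h\le H$ and $0\le\theta_0\le R$ let $u_{h,\theta_0}$ be the rotationally symmetric function on the cap $\Omega_R=\{\Psi(\theta,\phi):0\le\theta\le R\}$ given by $$u_{h,\theta_0}(\theta)=\begin{cases}h,&\theta\in[0,\theta_0],\\ \frac{h}{R-\theta_0}(R-\theta),&\theta\in(\theta_0,R],\end{cases}$$ (with $u_{h,R}\equiv h$). Then the function $(h,\theta_0)\mapsto R_1[u_{h,\theta_0}]$ on $[0,H]\times[0,R]$ attains its minimum at a unique point, namely $(H,\theta_0^* )$, where $\theta_0^*$ is the unique solution in $(0,R)$ of $$\sin\theta_0\,\big(H^2+(R-\theta_0)^2\big)=2(R-\theta_0)(\cos\theta_0-\cos R).$$ Explicitly, $R_1[u_{h,\theta_0}]=2\pi\Big[1-\cos\theta_0+\frac{(R-\theta_0)^2(\cos\theta_0-\cos R)}{(R-\theta_0)^2+h^2}\Big]$.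
   Context: Spherical coordinates $\Psi(\theta,\phi)=(\sin\theta\cos\phi,\sin\theta\sin\phi,\cos\theta)$ on $\mathbb{S}^2$. For $u$ on a domain $\Omega\subset\mathbb{S}^2$, $R_1[u]=\int_\Omega\frac{1}{1+|\nabla_{\mathbb{S}^2}u|^2}d\Omega$; for rotationally symmetric $u=u(\theta)$ on $\Omega_R$ this equals $2\pi\int_0^R\frac{\sin\theta}{1+u'(\theta)^2}d\theta$. The graphs of the $u_{h,\theta_0}$ are called radial frustum cones. *)

(* Defs.v *)
From Stdlib Require Import Reals.
From Coquelicot Require Import Coquelicot.
Open Scope R_scope.

Definition u_frustum (Rc h theta0 : R) (theta : R) : R :=
  if Rle_dec theta theta0 then h else h / (Rc - theta0) * (Rc - theta).

(* R_1 for a rotationally symmetric u = u(theta) on the cap Omega_R: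
   R_1[u] = 2 pi \int_0^R sin(theta) / (1 + u'(theta)^2) d theta. *)
Definition R1_rot (Rc : R) (u : R -> R) : R :=
  2 * PI * RInt (fun theta => sin theta / (1 + (Derive u theta) ^ 2)) 0 Rc.

Definition theta_star_eq (H Rc t : R) : Prop :=
  sin t * (H ^ 2 + (Rc - t) ^ 2) = 2 * (Rc - t) * (cos t - cos Rc).

(* Main.v *)
Require Import Defs.
From Stdlib Require Import Psatz.
From Stdlib Require Import Reals Lra.
From Coquelicot Require Import Coquelicot.
Open Scope R_scope.

Lemma ball_R (x e y : R) : ball x e y -> x - e < y < x + e.
Proof. intros Hy. change (Rabs (y - x) < e) in Hy. apply Rabs_def2 in Hy. lra. Qed.

Lemma Du_left Rc h t0 th : th < t0 -> Derive (u_frustum Rc h t0) th = 0.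
Proof.
  intros Hth. apply is_derive_unique.
  apply is_derive_ext_loc with (fun _ => h).
  - assert (Hp : 0 < t0 - th) by lra.
    exists (mkposreal _ Hp). intros y Hy. apply ball_R in Hy. simpl in Hy.
    unfold u_frustum. destruct (Rle_dec y t0); [reflexivity| lra].
  - auto_derive; [exact I| ring].
Qed.

Lemma Du_right Rc h t0 th : t0 < th -> Derive (u_frustum Rc h t0) th = - (h / (Rc - t0)).
Proof.
  intros Hth. apply is_derive_unique.
  apply is_derive_ext_loc with (fun y => h / (Rc - t0) * (Rc - y)).
  - assert (Hp : 0 < th - t0) by lra.
    exists (mkposreal _ Hp). intros y Hy. apply ball_R in Hy. simpl in Hy.
    unfold u_frustum. destruct (Rle_dec y t0); [lra| reflexivity].
  - auto_derive; [exact I| ring].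
Qed.

Lemma is_RInt_sinK (K a b : R) : is_RInt (fun x => K * sin x) a b (K * (cos a - cos b)).
Proof.
  replace (K * (cos a - cos b)) with (minus ((fun x => - K * cos x) b) ((fun x => - K * cos x) a)).
  2:{ unfold minus, plus, opp; simpl. ring. }
  apply (is_RInt_derive (fun x => - K * cos x) (fun x => K * sin x)).
  - intros x _. auto_derive; [exact I| ring].
  - intros x _. apply continuity_pt_filterlim. apply continuity_pt_mult.
    apply continuity_pt_const. intros ??; reflexivity. apply continuity_sin.
Qed.

Lemma R1_formula Rc h t0 : 0 <= t0 <= Rc ->
  R1_rot Rc (u_frustum Rc h t0) =
     2 * PI * (1 - cos t0 + (Rc - t0) ^ 2 * (cos t0 - cos Rc) / ((Rc - t0) ^ 2 + h ^ 2)).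
Proof.
  intros [H0 H1]. unfold R1_rot. f_equal.
  set (K := / (1 + (- (h / (Rc - t0)))^2)).
  assert (HI : is_RInt (fun theta => sin theta / (1 + (Derive (u_frustum Rc h t0) theta) ^ 2)) 0 Rc
                 (plus (1 * (cos 0 - cos t0)) (K * (cos t0 - cos Rc)))).
  { apply (is_RInt_Chasles (V:=R_NormedModule)) with t0.
    - apply is_RInt_ext with (fun x => 1 * sin x); [|apply is_RInt_sinK].
      intros x Hx. rewrite Rmin_left in Hx by lra. rewrite Rmax_right in Hx by lra.
      rewrite Du_left by lra. simpl. field.
    - apply is_RInt_ext with (fun x => K * sin x); [|apply is_RInt_sinK].
      intros x Hx. rewrite Rmin_left in Hx by lra. rewrite Rmax_right in Hx by lra.
      rewrite Du_right by lra. unfold K. simpl. field.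
      split; [lra|]. apply Rgt_not_eq. assert (0 < (Rc - t0) * (Rc - t0)) by (apply Rmult_lt_0_compat; lra). nra. }
  rewrite (is_RInt_unique _ _ _ _ HI). unfold plus; simpl. rewrite cos_0.
  destruct (Req_dec t0 Rc) as [E|E].
  - subst. replace (Rc - Rc) with 0 by ring. unfold Rdiv. simpl. ring.
  - unfold K. field. split.
    + apply Rgt_not_eq. assert (0 < (Rc - t0)^2) by (apply pow_lt; lra).
      assert (0 <= h^2) by apply pow2_ge_0. lra.
    + lra.
Qed.

Lemma mvt_pos (f f' : R -> R) x y : x < y ->
  (forall c, x <= c <= y -> derivable_pt_lim f c (f' c)) ->
  (forall c, x < c < y -> 0 < f' c) -> f x < f y.
Proof.
  intros Hxy Hd Hp. destruct (MVT_cor2 f f' x y Hxy Hd) as [c [E Hc]].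
  specialize (Hp c Hc). assert (0 < f' c * (y - x)) by (apply Rmult_lt_0_compat; lra). lra.
Qed.

Definition phi H Rc t := sin t * (H^2 + (Rc-t)^2) - 2*(Rc-t)*(cos t - cos Rc).
Definition fval H Rc t := 1 - cos t + (Rc - t)^2 * (cos t - cos Rc) / ((Rc - t)^2 + H^2).
Definition psi H Rc t := H^2 + (Rc-t)^2 - 2*(Rc-t)*(cos t - cos Rc)/sin t.
Definition kf Rc t := sin t + (Rc - t)*cos t.

Section S.
Variables (H Rc : R) (HH : 0 < H) (HR0 : 0 < Rc) (HRpi : Rc < PI).

Lemma sin_pos t : 0 < t < Rc -> 0 < sin t.
Proof. intros; apply sin_gt_0; lra. Qed.

Lemma cdiff_pos t : 0 <= t < Rc -> 0 < cos t - cos Rc.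
Proof. intros. assert (cos Rc < cos t) by (apply cos_decreasing_1; lra). lra. Qed.

Lemma kf_pos t : 0 < t < Rc -> 0 < kf Rc t.
Proof.
  intros Ht.
  assert (A : - kf Rc t < - kf Rc Rc).
  { apply (mvt_pos (fun t => - kf Rc t) (fun t => (Rc - t) * sin t)); [lra| |].
    - intros c _. apply is_derive_Reals. unfold kf. auto_derive; [exact I| ring].
    - intros c Hc. apply Rmult_lt_0_compat; [lra| apply sin_pos; lra]. }
  unfold kf at 2 in A. replace (Rc - Rc) with 0 in A by ring.
  assert (0 < sin Rc) by (apply sin_gt_0; lra). lra.
Qed.

Lemma psi_incr x y : 0 < x -> x < y -> y < Rc -> psi H Rc x < psi H Rc y.
Proof.
  intros Hx Hxy Hy.
  apply (mvt_pos _ (fun t => 2 * (cos t - cos Rc) * kf Rc t / (sin t)^2)); [lra| |].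
  - intros c Hc. assert (0 < sin c) by (apply sin_pos; lra).
    apply is_derive_Reals. unfold psi, kf. auto_derive.
    + lra.
    + field. lra.
  - intros c Hc. assert (0 < sin c) by (apply sin_pos; lra).
    assert (0 < cos c - cos Rc) by (apply cdiff_pos; lra).
    assert (0 < kf Rc c) by (apply kf_pos; lra).
    apply Rdiv_lt_0_compat; [|apply pow_lt; lra].
    apply Rmult_lt_0_compat; lra.
Qed.

Lemma psi_phi t : 0 < t < Rc -> phi H Rc t = sin t * psi H Rc t.
Proof. intros Ht. assert (0 < sin t) by (apply sin_pos; lra). unfold phi, psi. field. lra. Qed.

Lemma fval_deriv t : derivable_pt_lim (fval H Rc) t (H^2 * phi H Rc t / ((Rc - t)^2 + H^2)^2).
Proof.
  assert (0 < (Rc - t)^2 + H^2) by (assert (0 <= (Rc-t)^2) by apply pow2_ge_0; assert (0 < H^2) by (apply pow_lt; lra); lra).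
  apply is_derive_Reals. unfold fval, phi. auto_derive.
  - lra.
  - field. lra.
Qed.

Lemma fval_deriv_sign t c : 0 < t < Rc -> 0 < c * psi H Rc t -> 0 < c * (H^2 * phi H Rc t / ((Rc - t)^2 + H^2)^2).
Proof.
  intros Ht Hc. rewrite psi_phi by lra.
  assert (0 < sin t) by (apply sin_pos; lra).
  assert (0 < (Rc - t)^2 + H^2) by (assert (0 <= (Rc-t)^2) by apply pow2_ge_0; assert (0 < H^2) by (apply pow_lt; lra); lra).
  assert (0 < H^2) by (apply pow_lt; lra).
  replace (c * (H ^ 2 * (sin t * psi H Rc t) / ((Rc - t) ^ 2 + H ^ 2) ^ 2)) with
    ((c * psi H Rc t) * (H^2 * sin t / ((Rc - t) ^ 2 + H ^ 2) ^ 2)) by (field; lra).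
  apply Rmult_lt_0_compat; [lra|]. apply Rdiv_lt_0_compat; [nra| apply pow_lt; lra].
Qed.

Lemma root_exists : exists ts, 0 < ts < Rc /\ phi H Rc ts = 0.
Proof.
  assert (Hc : continuity (phi H Rc)).
  { intros x. apply continuity_pt_filterlim. apply (ex_derive_continuous (V:=R_NormedModule)).
    unfold phi. auto_derive. exact I. }
  assert (H0 : phi H Rc 0 < 0).
  { unfold phi. rewrite sin_0, cos_0. assert (cos Rc < 1) by (rewrite <- cos_0; apply cos_decreasing_1; lra). nra. }
  assert (H1 : 0 < phi H Rc Rc).
  { unfold phi. replace (Rc - Rc) with 0 by ring. assert (0 < sin Rc) by (apply sin_gt_0; lra).
    assert (0 < H^2) by (apply pow_lt; lra). nra. }
  destruct (IVT _ 0 Rc Hc HR0 H0 H1) as [z [Hz E]].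
  exists z. split; [|exact E]. split.
  - destruct (Req_dec z 0); [subst; lra| lra].
  - destruct (Req_dec z Rc); [subst; lra| lra].
Qed.

Lemma mvt_neg (f f' : R -> R) x y : x < y ->
  (forall c, x <= c <= y -> derivable_pt_lim f c (f' c)) ->
  (forall c, x < c < y -> f' c < 0) -> f y < f x.
Proof.
  intros Hxy Hd Hp. destruct (MVT_cor2 f f' x y Hxy Hd) as [c [E Hc]].
  specialize (Hp c Hc). assert (f' c * (y - x) < 0).
  { assert (0 < - f' c * (y - x)) by (apply Rmult_lt_0_compat; lra). lra. } lra.
Qed.

Lemma fval_min ts : 0 < ts < Rc -> phi H Rc ts = 0 ->
  forall t, 0 <= t <= Rc -> t <> ts -> fval H Rc ts < fval H Rc t.
Proof.
  intros Hts E t Ht Hne.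
  assert (Ps : psi H Rc ts = 0).
  { rewrite psi_phi in E by lra. assert (0 < sin ts) by (apply sin_pos; lra).
    destruct (Rmult_integral _ _ E); [lra| assumption]. }
  destruct (Rtotal_order t ts) as [Hl|[Heq|Hg]]; [| lra |].
  - apply (mvt_neg _ (fun c => H^2 * phi H Rc c / ((Rc - c)^2 + H^2)^2) t ts Hl); [intros; apply fval_deriv|].
    intros c Hc. assert (psi H Rc c < psi H Rc ts).
    { destruct (Req_dec c 0); [lra|]. apply psi_incr; lra. }
    assert (X := fval_deriv_sign c (-1) ltac:(lra) ltac:(lra)). lra.
  - apply (mvt_pos _ (fun c => H^2 * phi H Rc c / ((Rc - c)^2 + H^2)^2) ts t Hg); [intros; apply fval_deriv|].
    intros c Hc. assert (psi H Rc ts < psi H Rc c).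
    { apply psi_incr; lra. }
    assert (X := fval_deriv_sign c 1 ltac:(lra) ltac:(lra)). lra.
Qed.
End S.

Lemma A_le H Rc h t0 : 0 <= h <= H -> 0 <= t0 <= Rc -> Rc < PI ->
  (Rc - t0)^2 * (cos t0 - cos Rc) / ((Rc - t0)^2 + H^2) <=
  (Rc - t0)^2 * (cos t0 - cos Rc) / ((Rc - t0)^2 + h^2) /\
  (t0 < Rc -> h < H ->
   (Rc - t0)^2 * (cos t0 - cos Rc) / ((Rc - t0)^2 + H^2) <
   (Rc - t0)^2 * (cos t0 - cos Rc) / ((Rc - t0)^2 + h^2)).
Proof.
  intros Hh Ht Hpi.
  destruct (Req_dec t0 Rc) as [E|E].
  { subst. replace (Rc - Rc) with 0 by ring. unfold Rdiv. simpl. split; [lra| intros; lra]. }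
  assert (Hc : 0 < cos t0 - cos Rc) by (assert (cos Rc < cos t0) by (apply cos_decreasing_1; lra); lra).
  assert (Ha : 0 < (Rc - t0)^2) by (apply pow_lt; lra).
  assert (HN : 0 < (Rc - t0)^2 * (cos t0 - cos Rc)) by (apply Rmult_lt_0_compat; lra).
  assert (0 <= h^2) by apply pow2_ge_0.
  split.
  - unfold Rdiv. apply Rmult_le_compat_l; [lra|]. apply Rinv_le_contravar; [lra|].
    apply Rplus_le_compat_l. apply pow_incr; lra.
  - intros _ Hlt. unfold Rdiv. apply Rmult_lt_compat_l; [lra|]. apply Rinv_lt_contravar.
    + assert (0 < (Rc - t0)^2 + H^2) by nra. nra.
    + apply Rplus_lt_compat_l. simpl. nra.
Qed.

Theorem mainTheorem4 (H Rc : R) (HH : 0 < H) (HR0 : 0 < Rc) (HRpi : Rc < PI) :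
  (* explicit formula *)
  (forall h t0, 0 <= h <= H -> 0 <= t0 <= Rc ->
     R1_rot Rc (u_frustum Rc h t0) =
     2 * PI * (1 - cos t0 + (Rc - t0) ^ 2 * (cos t0 - cos Rc) / ((Rc - t0) ^ 2 + h ^ 2)))
  /\
  exists t0s : R,
    (* t0s is the unique solution in (0,Rc) of the equation *)
    (0 < t0s < Rc /\ theta_star_eq H Rc t0s /\
     forall t, 0 < t < Rc -> theta_star_eq H Rc t -> t = t0s) /\
    (* (H, t0s) is a minimum point on [0,H] x [0,Rc] ... *)
    (forall h t0, 0 <= h <= H -> 0 <= t0 <= Rc ->
       R1_rot Rc (u_frustum Rc H t0s) <= R1_rot Rc (u_frustum Rc h t0)) /\
    (* ... and the unique one *)
    (forall h t0, 0 <= h <= H -> 0 <= t0 <= Rc ->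
       R1_rot Rc (u_frustum Rc h t0) = R1_rot Rc (u_frustum Rc H t0s) ->
       h = H /\ t0 = t0s).
Proof.
  split; [intros h t0 _ Ht; apply R1_formula; exact Ht|].
  destruct (root_exists H Rc HH HR0 HRpi) as [ts [Hts Ephi]].
  assert (HPI := PI_RGT_0).
  exists ts. split; [|split].
  - split; [exact Hts|]. split.
    + unfold theta_star_eq. unfold phi in Ephi. lra.
    + intros t Ht Et. assert (Ept : phi H Rc t = 0) by (unfold theta_star_eq in Et; unfold phi; lra).
      assert (Pt : psi H Rc t = 0).
      { rewrite (psi_phi H Rc HRpi) in Ept by lra. assert (0 < sin t) by (apply sin_gt_0; lra).
        destruct (Rmult_integral _ _ Ept); [lra| assumption]. }
      assert (Ps : psi H Rc ts = 0).
      { rewrite (psi_phi H Rc HRpi) in Ephi by lra. assert (0 < sin ts) by (apply sin_gt_0; lra).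
        destruct (Rmult_integral _ _ Ephi); [lra| assumption]. }
      destruct (Rtotal_order t ts) as [Hl|[Heq|Hg]]; [| exact Heq |].
      * assert (X := psi_incr H Rc HR0 HRpi t ts ltac:(lra) Hl ltac:(lra)). lra.
      * assert (X := psi_incr H Rc HR0 HRpi ts t ltac:(lra) Hg ltac:(lra)). lra.
  - intros h t0 Hh Ht0. rewrite !R1_formula by lra.
      destruct (A_le H Rc h t0 Hh Ht0 HRpi) as [A1 _].
      assert (fval H Rc ts <= fval H Rc t0).
      { destruct (Req_dec t0 ts) as [E|E]; [subst; lra|].
        left. apply (fval_min H Rc HH HR0 HRpi ts Hts Ephi t0 Ht0 E). }
      unfold fval in H0. apply Rmult_le_compat_l; lra.
  - intros h t0 Hh Ht0 Eq. rewrite !R1_formula in Eq by lra.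
      destruct (A_le H Rc h t0 Hh Ht0 HRpi) as [A1 A2].
      assert (Et : t0 = ts).
      { destruct (Req_dec t0 ts) as [E|E]; [exact E|].
        assert (X := fval_min H Rc HH HR0 HRpi ts Hts Ephi t0 Ht0 E). unfold fval in X.
        exfalso. apply Rmult_eq_reg_l in Eq; [lra| lra]. }
      split; [|exact Et]. subst t0.
      destruct (Req_dec h H) as [E|E]; [exact E|].
      exfalso. specialize (A2 ltac:(lra) ltac:(lra)). apply Rmult_eq_reg_l in Eq; [lra| lra].
Qed.
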